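(* Let $x\in\mathbb{R}^d$ and $i\in\{1,\dots,d\}$ with $g_i:=\nabla_i f(x)\ne0$. Suppose $\hat g_i$ is a real random variable with $\mathbb{E}\hat g_i=g_i$, variance $\sigma_i^2$, whose distribution is unimodal and symmetric (about $g_i$). Then $$\rho_i:=\mathrm{Prob}(\mathrm{sign}\,\hat g_i=\mathrm{sign}\,g_i)\ge\frac12+\frac12\frac{|g_i|}{|g_i|+\sqrt3\sigma_i}>\frac12.$$
   Context: $\mathrm{sign}\,t=1,0,-1$ for $t>0,t=0,t<0$. *)

(* Defs.v *)
(* real-valued random variable encoded by its distribution
   function F(t) = Prob(X <= t) (MathComp-analysis / measure theory is not
   installed; a probability distribution on R is the same thing as its CDF). *)
From Stdlib Require Import Reals Lra.
Open Scope R_scope.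

Definition right_cont (F : R -> R) (x : R) : Prop :=
  forall eps, 0 < eps -> exists delta, 0 < delta /\
    forall y, x <= y < x + delta -> Rabs (F y - F x) < eps.

(* L is the left limit of F at x, i.e. L = Prob(X < x) *)
Definition left_lim (F : R -> R) (x L : R) : Prop :=
  forall eps, 0 < eps -> exists delta, 0 < delta /\
    forall y, x - delta < y < x -> Rabs (F y - L) < eps.

Definition is_cdf (F : R -> R) : Prop :=
  (forall x y, x <= y -> F x <= F y) /\
  (forall x, right_cont F x) /\
  (forall eps, 0 < eps -> exists M, forall x, x <= M -> Rabs (F x) < eps) /\
  (forall eps, 0 < eps -> exists M, forall x, M <= x -> Rabs (F x - 1) < eps).

Definition improper_int_0_inf (h : R -> R) (I : R) : Prop :=
  forall eps, 0 < eps -> exists T0, forall T, T0 <= T ->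
    exists pr : Riemann_integrable h 0 T, Rabs (RiemannInt pr - I) < eps.

(* E X = mu, via E X = \int_0^oo P(X>t) dt - \int_{-oo}^0 P(X<=t) dt
   (both integrals finite) *)
Definition has_mean (F : R -> R) (mu : R) : Prop :=
  exists A B, improper_int_0_inf (fun t => 1 - F t) A /\
              improper_int_0_inf (fun t => F (- t)) B /\ mu = A - B.

(* E (X - mu)^2 = v, via E (X-mu)^2 = \int_0^oo 2t P(|X - mu| > t) dt;
   P(|X-mu|>t) = (1 - F(mu+t)) + P(X < mu-t), and P(X < mu - t) differs from
   F(mu - t) only at countably many t, which does not change the integral. *)
Definition has_variance (F : R -> R) (mu v : R) : Prop :=
  improper_int_0_inf (fun t => 2 * t * (1 - F (mu + t) + F (mu - t))) v.

(* distribution symmetric about m: P(X <= m - t) = P(X >= m + t) for all t *)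
Definition symmetric_about (F : R -> R) (m : R) : Prop :=
  forall t L, left_lim F (m + t) L -> F (m - t) = 1 - L.

(* unimodal with mode m (Khintchine): F convex on (-oo,m), concave on (m,oo) *)
Definition unimodal_at (F : R -> R) (m : R) : Prop :=
  (forall x y l, x < m -> y < m -> 0 <= l <= 1 ->
     F (l * x + (1 - l) * y) <= l * F x + (1 - l) * F y) /\
  (forall x y l, m < x -> m < y -> 0 <= l <= 1 ->
     l * F x + (1 - l) * F y <= F (l * x + (1 - l) * y)).


(* rho = Prob(sign X = sign g) for g <> 0:
   g > 0 : rho = P(X > 0) = 1 - F 0 ;  g < 0 : rho = P(X < 0) = F(0-) *)
Definition sign_agree_prob (F : R -> R) (g rho : R) : Prop :=
  (0 < g -> rho = 1 - F 0) /\ (g < 0 -> left_lim F 0 rho).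

(* Main.v *)
Require Import Defs.
From Stdlib Require Import Reals.
From Stdlib Require Import Lra Classical.
From Coquelicot Require Import Coquelicot.
Open Scope R_scope.

Lemma cdf_bounds F : is_cdf F -> forall x, 0 <= F x <= 1.
Proof.
  intros [Hm [_ [Hl Hr]]] x. split.
  - apply Rnot_lt_le; intro H.
    destruct (Hl (- F x)) as [M HM]; [lra|].
    set (y := Rmin M x). assert (y <= M) by apply Rmin_l. assert (y <= x) by apply Rmin_r.
    specialize (HM y H0). specialize (Hm y x H1). apply Rabs_def2 in HM. lra.
  - apply Rnot_lt_le; intro H.
    destruct (Hr (F x - 1)) as [M HM]; [lra|].
    set (y := Rmax M x). assert (M <= y) by apply Rmax_l. assert (x <= y) by apply Rmax_r.
    specialize (HM y H0). specialize (Hm x y H1). apply Rabs_def2 in HM. lra.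
Qed.

Lemma left_lim_ex F : is_cdf F -> forall x, exists L, left_lim F x L /\ forall y, y < x -> F y <= L.
Proof.
  intros HF x. assert (Hb := cdf_bounds F HF). destruct HF as [Hm _].
  set (E := fun v => exists y, y < x /\ v = F y).
  assert (HE1 : bound E). { exists 1. intros v [y [_ ->]]. apply Hb. }
  assert (HE2 : exists v, E v). { exists (F (x-1)). exists (x-1). split; [lra|auto]. }
  destruct (completeness E HE1 HE2) as [L [HL1 HL2]].
  exists L. split.
  - intros eps Heps.
    destruct (classic (exists y, y < x /\ L - eps < F y)) as [[y0 [Hy0 Hy0']]|Hn].
    + exists (x - y0). split; [lra|]. intros y Hy.
      assert (F y0 <= F y) by (apply Hm; lra).
      assert (F y <= L) by (apply HL1; exists y; split; [lra|auto]).
      apply Rabs_def1; lra.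
    + exfalso. assert (L <= L - eps); [|lra]. apply HL2. intros v [y [Hy ->]].
      apply Rnot_lt_le. intro. apply Hn. exists y. auto.
  - intros y Hy. apply HL1. exists y. auto.
Qed.

Lemma div_le A B p q : 0 < p -> 0 < q -> A*q <= B*p -> A/p <= B/q.
Proof.
  intros Hp Hq H. apply Rmult_le_reg_r with (p*q). nra.
  replace (A/p*(p*q)) with (A*q) by (field; lra).
  replace (B/q*(p*q)) with (B*p) by (field; lra). auto.
Qed.

Lemma three_point F g x b y : unimodal_at F g -> x < b -> b < y -> y < g ->
  (F b - F x)/(b - x) <= (F y - F b)/(y - b).
Proof.
  intros [Hc _] H1 H2 H3. apply div_le; try lra.
  set (l := (y-b)/(y-x)).
  assert (Hl : 0 <= l <= 1).
  { assert (E1 : l*(y-x) = y-b) by (unfold l; field; lra). split; nra. }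
  assert (Hc' := Hc x y l ltac:(lra) ltac:(lra) Hl).
  replace (l*x + (1-l)*y) with b in Hc' by (unfold l; field; lra).
  assert (F b * (y-x) <= (l*F x + (1-l)*F y)*(y-x)) by (apply Rmult_le_compat_r; lra).
  replace ((l*F x + (1-l)*F y)*(y-x)) with ((y-b)*F x + (b-x)*F y) in H by (unfold l; field; lra).
  nra.
Qed.

Lemma subgrad F g b : is_cdf F -> unimodal_at F g -> b < g ->
  exists m, 0 <= m /\ forall y, y < g -> F b + m*(y-b) <= F y.
Proof.
  intros HF Hu Hbg. destruct HF as [Hm _].
  set (E := fun s => exists x, x < b /\ s = (F b - F x)/(b - x)).
  set (y0 := (b+g)/2).
  assert (HE1 : bound E).
  { exists ((F y0 - F b)/(y0 - b)). intros s [x [Hx ->]]. apply (three_point F g); [exact Hu|..]; unfold y0; lra. }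
  assert (HE2 : E ((F b - F (b-1))/(b - (b-1)))). { exists (b-1). split; [lra|auto]. }
  destruct (completeness E HE1 (ex_intro _ _ HE2)) as [m [Hm1 Hm2]].
  exists m. split.
  - apply Rle_trans with ((F b - F (b-1))/(b - (b-1))); [|apply Hm1; auto].
    replace (b - (b-1)) with 1 by ring. assert (F (b-1) <= F b) by (apply Hm; lra). lra.
  - intros y Hy. destruct (Rtotal_order y b) as [Hlt|[Heq|Hgt]].
    + assert (Hs : (F b - F y)/(b-y) <= m) by (apply Hm1; exists y; auto).
      assert (F b - F y = ((F b - F y)/(b-y))*(b-y)) by (field; lra). nra.
    + subst. lra.
    + assert (Hs : m <= (F y - F b)/(y-b)).
      { apply Hm2. intros s [x [Hx ->]]. apply (three_point F g); [exact Hu|..]; lra. }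
      assert (F y - F b = ((F y - F b)/(y-b))*(y-b)) by (field; lra). nra.
Qed.

Lemma poly_int (c m T : R) :
  RInt (fun t => 4*t*(c - m*t)) 0 T = 2*c*T^2 - 4/3*m*T^3.
Proof.
  apply is_RInt_unique.
  assert (H := is_RInt_derive (fun t => 2*c*t^2 - 4/3*m*t^3) (fun t => 4*t*(c - m*t)) 0 T).
  replace (2*c*T^2 - 4/3*m*T^3) with (minus (2*c*T^2 - 4/3*m*T^3) (2*c*0^2 - 4/3*m*0^3)).
  2:{ unfold minus, plus, opp; simpl; ring. }
  apply H.
  - intros x _. auto_derive; auto. field.
  - intros x _. apply continuity_pt_filterlim.
    apply derivable_continuous_pt. 
    apply derivable_pt_mult. apply derivable_pt_mult. apply derivable_pt_const. apply derivable_pt_id.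
    apply derivable_pt_minus. apply derivable_pt_const. apply derivable_pt_mult. apply derivable_pt_const. apply derivable_pt_id.
Qed.

Lemma int_lower (h : R -> R) (V c m : R) :
  (forall t, 0 < t -> 0 <= h t) ->
  improper_int_0_inf h V ->
  (forall t, 0 < t -> 4*t*(c - m*t) <= h t) ->
  forall T, 0 <= T -> 2*c*T^2 - 4/3*m*T^3 <= V.
Proof.
  intros hpos HV hk T HT.
  apply Rnot_lt_le; intro Hlt.
  set (e := 2*c*T^2 - 4/3*m*T^3 - V).
  assert (He : 0 < e) by (unfold e; lra).
  destruct (HV e He) as [T0 HT0].
  destruct (HT0 (Rmax T T0) (Rmax_r _ _)) as [pr Hpr].
  set (T' := Rmax T T0) in *.
  assert (HTT : T <= T') by apply Rmax_l.
  assert (Hex := ex_RInt_Reals_1 _ _ _ pr).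
  rewrite <- RInt_Reals in Hpr.
  assert (Hex1 : ex_RInt h 0 T) by (apply (@ex_RInt_Chasles_1 R_CompleteNormedModule _ _ _ T'); auto; lra).
  assert (Hex2 : ex_RInt h T T') by (apply (@ex_RInt_Chasles_2 R_CompleteNormedModule _ 0); auto; lra).
  assert (HC := @RInt_Chasles R_CompleteNormedModule h 0 T T' Hex1 Hex2).
  assert (H2 : 0 <= RInt h T T').
  { apply RInt_ge_0; auto. intros x Hx. apply hpos. lra. }
  assert (H1 : RInt (fun t => 4*t*(c - m*t)) 0 T <= RInt h 0 T).
  { apply RInt_le; auto.
    - eexists. apply (is_RInt_derive (fun t => 2*c*t^2 - 4/3*m*t^3)).
      + intros x _. auto_derive; auto. field.
      + intros x _. apply continuity_pt_filterlim.
        apply derivable_continuous_pt. 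
        apply derivable_pt_mult. apply derivable_pt_mult. apply derivable_pt_const. apply derivable_pt_id.
        apply derivable_pt_minus. apply derivable_pt_const. apply derivable_pt_mult. apply derivable_pt_const. apply derivable_pt_id.
    - intros x Hx. apply hk. lra. }
  rewrite poly_int in H1.
  unfold plus in HC; simpl in HC.
  apply Rabs_def2 in Hpr. unfold e in *. lra.
Qed.

Theorem lemma1 (F : R -> R) (g sigma : R) :
  g <> 0 -> 0 <= sigma ->
  is_cdf F ->
  has_mean F g ->
  has_variance F g (sigma ^ 2) ->
  symmetric_about F g ->
  unimodal_at F g ->
  forall rho, sign_agree_prob F g rho ->
    1/2 + 1/2 * (Rabs g / (Rabs g + sqrt 3 * sigma)) <= rho /\
    1/2 < 1/2 + 1/2 * (Rabs g / (Rabs g + sqrt 3 * sigma)).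
Proof.
  intros Hg Hs HF _ HV Hsym Hu rho [Hr1 Hr2].
  assert (Hb := cdf_bounds F HF).
  assert (Hmono : forall x y, x <= y -> F x <= F y) by apply HF.
  set (a := Rabs g).
  assert (Ha : 0 < a) by (apply Rabs_pos_lt; auto).
  set (q := F (g - a)).
  assert (Hrho : rho = 1 - q).
  { destruct (Rtotal_order g 0) as [Hlt|[Heq|Hgt]].
    - unfold q, a. rewrite Rabs_left by auto.
      assert (HL := Hsym (- g) rho). replace (g + - g) with 0 in HL by ring.
      specialize (HL (Hr2 Hlt)). replace (g - - g) with (g - - g) by ring. lra.
    - contradiction.
    - unfold q, a. rewrite Rabs_right by lra. replace (g - g) with 0 by ring. auto. }
  destruct (subgrad F g (g - a) HF Hu ltac:(lra)) as [m [Hm0 Hm]].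
  set (c := q + m*a).
  assert (Hlw : forall t, 0 < t -> c - m*t <= F (g - t)).
  { intros t Ht. specialize (Hm (g - t) ltac:(lra)). unfold c, q in *. lra. }
  assert (Hhalf : forall t, 0 < t -> F (g - t) <= 1/2).
  { intros t Ht. destruct (left_lim_ex F HF (g + t)) as [L [HL HL']].
    assert (HS := Hsym t L HL). specialize (HL' (g - t) ltac:(lra)). lra. }
  assert (Hc : c <= 1/2).
  { apply Rnot_lt_le; intro H.
    set (t := Rmin (a/2) ((c - 1/2)/(2*(m+1)))).
    assert (t <= a/2) by apply Rmin_l.
    assert (t <= (c - 1/2)/(2*(m+1))) by apply Rmin_r.
    assert (0 < t).
    { unfold t, Rmin. destruct (Rle_dec _ _); [lra|].
      apply Rdiv_lt_0_compat; lra. }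
    assert (m * t < c - 1/2).
    { assert (E1 : (c - 1/2)/(2*(m+1)) * (2*(m+1)) = c - 1/2) by (field; lra). nra. }
    specialize (Hlw t H2). specialize (Hhalf t H2). lra. }
  assert (Hup : forall t, 0 < t -> c - m*t <= 1 - F (g + t)).
  { intros t Ht.
    assert (Hgen : forall t', t < t' -> F (g - t') <= 1 - F (g + t)).
    { intros t' Ht'. destruct (left_lim_ex F HF (g + t')) as [L [HL HL']].
      rewrite (Hsym t' L HL). specialize (HL' (g + t) ltac:(lra)). lra. }
    apply Rnot_lt_le; intro H.
    set (d := c - m*t - (1 - F (g + t))).
    assert (Hd : 0 < d) by (unfold d; lra).
    set (t' := t + d/(2*(m+1))).
    assert (0 < d/(2*(m+1))) by (apply Rdiv_lt_0_compat; lra).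
    assert (E1 : d/(2*(m+1)) * (2*(m+1)) = d) by (field; lra).
    assert (m * (d/(2*(m+1))) < d) by nra.
    specialize (Hgen t' ltac:(unfold t'; lra)). specialize (Hlw t' ltac:(unfold t'; lra)).
    unfold t', d in *. lra. }
  assert (Hint := int_lower (fun t => 2 * t * (1 - F (g + t) + F (g - t))) (sigma^2) c m).
  assert (Hpos : forall t, 0 < t -> 0 <= 2 * t * (1 - F (g + t) + F (g - t))).
  { intros t Ht. assert (Hb1 := Hb (g+t)). assert (Hb2 := Hb (g - t)). 
    apply Rmult_le_pos; lra. }
  assert (Hk : forall t, 0 < t -> 4*t*(c - m*t) <= 2 * t * (1 - F (g + t) + F (g - t))).
  { intros t Ht. specialize (Hup t Ht). specialize (Hlw t Ht). nra. }
  specialize (Hint Hpos HV Hk).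
  assert (Hq0 : 0 <= q) by apply Hb.
  set (w := sqrt 3 * sigma).
  assert (Hw0 : 0 <= w) by (unfold w; apply Rmult_le_pos; [apply sqrt_pos|auto]).
  assert (Hw2 : w * w = 3 * sigma^2).
  { unfold w. replace (sqrt 3 * sigma * (sqrt 3 * sigma)) with (sqrt 3 * sqrt 3 * sigma^2) by ring.
    rewrite sqrt_sqrt; lra. }
  assert (Hmain : 2 * q * (a + w) <= w).
  { destruct (Req_dec q 0) as [Hq|Hq]. { rewrite Hq. lra. }
    assert (Hqp : 0 < q) by lra.
    destruct (Req_dec m 0) as [Hm'|Hm'].
    - exfalso. set (T := sigma^2 / q + 1).
      assert (HT : 1 <= T) by (unfold T; assert (0 <= sigma^2/q) by (apply Rdiv_le_0_compat; nra); lra).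
      specialize (Hint T ltac:(lra)).
      assert (E1 : sigma^2/q * q = sigma^2) by (field; lra).
      unfold c in Hint. rewrite Hm' in Hint.
      assert (T*T >= T) by nra. 
      assert (2*(q + 0*a)*T^2 - 4/3*0*T^3 = 2*q*(T*T)) by ring. assert (q*T = sigma^2 + q) by (unfold T; nra). assert (q*(T*T) >= q*T) by nra. assert (0 <= sigma^2) by nra. nra.
    - assert (Hmp : 0 < m) by lra.
      specialize (Hint (c/m) ltac:(apply Rdiv_le_0_compat; unfold c; nra)).
      assert (E1 : c/m*m = c) by (field; lra).
      assert (Hcp : 0 < c) by (unfold c; nra).
      assert (Hz : (w*m)*(w*m) >= 2*c^3).
      { replace (2 * c * (c/m)^2 - 4/3*m*(c/m)^3) with (2/3*c^3/(m*m)) in Hint by (field; lra).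
        assert (E2 : 2/3*c^3/(m*m)*(m*m) = 2/3*c^3) by (field; lra).
        nra. }
      assert (Hz2 : w*m >= 2*c^2).
      { assert (2*c^3 >= 4*c^4) by nra.
        assert (0 <= w*m) by nra. nra. }
      assert (Ha' : a*m = c - q) by (unfold c; ring).
      assert (H1 : 2*c^2*(1-2*q) >= 2*q*(c-q)).
      { assert (q <= c) by (unfold c; nra). assert (0 <= q*c*(1-2*c)) by (apply Rmult_le_pos; nra). assert (0 <= (c-q)^2) by nra. nra. }
      assert (H2 : w*m*(1-2*q) >= 2*c^2*(1-2*q)) by (assert (q <= c) by (unfold c; nra); nra).
      assert (m * (2*q*(a+w)) <= m * w) by nra.
      apply Rmult_le_reg_l with m; auto. }
  assert (Haw : 0 < a + w) by lra.
  assert (E1 : a/(a+w) * (a+w) = a) by (field; lra).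
  assert (0 < a/(a+w)) by (apply Rdiv_lt_0_compat; lra).
  split; [|lra].
  rewrite Hrho. nra.
Qed.
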